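(* Let $p$ be a prime and $d\ge1$ with $q=p^d>9$ and $q\equiv7\pmod{12}$. Let $H_0$ be the subgroup of order $(q-1)/6$ of ${\rm GF}(q)^\times$ and $G=\{x\mapsto ax+b: a\in H_0,\ b\in{\rm GF}(q)\}$, a nonabelian subgroup of the affine group of ${\rm GF}(q)$ isomorphic to $({\rm GF}(q),+)\rtimes C_{(q-1)/6}$. Then $G$ contains a regular \[\left(\frac{q(q-1)}{6},\ \frac{3(q-3)}{2},\ \frac{q+3}{2},\ 9\right)\text{-PDS}.\]
   Context: A $(v,k,\lambda,\mu)$-PDS in a group $G$ of order $v$ is a $k$-subset $D$ such that every nonidentity element of $D$ is $xy^{-1}$ ($x,y\in D$) in exactly $\lambda$ ways and every nonidentity element of $G\setminus D$ in exactly $\mu$ ways; regular means $D=D^{(-1)}$ and $1\notin D$. *)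

(* Defs.v *)
From mathcomp Require Import all_boot all_order all_algebra all_fingroup all_field.
Set Implicit Arguments. Unset Strict Implicit. Unset Printing Implicit Defensive.
Import GRing.Theory.

Section PDS.
Variables (T : finType) (mul : T -> T -> T) (inv : T -> T) (one : T).

Definition pds_count (D : {set T}) (g : T) : nat :=
  #|[set xy in setX D D | mul xy.1 (inv xy.2) == g]|.

Definition is_PDS (G : {set T}) (v k lam mu : nat) (D : {set T}) : Prop :=
  [/\ D \subset G, #|G| = v, #|D| = k &
      forall g, g \in G -> g != one ->
        pds_count D g = (if g \in D then lam else mu)].

Definition is_regular_PDS (G : {set T}) (v k lam mu : nat) (D : {set T}) : Prop :=
  [/\ is_PDS G v k lam mu D, D = inv @: D & one \notin D].
End PDS.

(* The affine maps x |-> a x + b, a a unit of F, b in F, encoded as pairs (a, b);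
   multiplication is composition of maps: (f * g)(x) = f (g x). *)
Section Affine.
Variable F : finFieldType.
Definition aff_mul (f g : {unit F} * F) : {unit F} * F :=
  ((f.1 * g.1)%g, (val f.1 * g.2 + f.2)%R).
Definition aff_inv (f : {unit F} * F) : {unit F} * F :=
  ((f.1)^-1%g, (- (val (f.1)^-1%g * f.2))%R).
Definition aff_one : {unit F} * F := (1%g, 0%R).
Definition aff_group (H0 : {set {unit F}}) : {set {unit F} * F} :=
  [set f | f.1 \in H0].
End Affine.

(* Main.v *)
Require Import Defs.
From mathcomp Require Import all_boot all_order all_algebra all_fingroup all_field.
From mathcomp Require Import ring zify.
Set Implicit Arguments. Unset Strict Implicit. Unset Printing Implicit Defensive.

Lemma cardsum (U : finType) (A : {pred U}) (Q : pred U) :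
  #|[set x in A | Q x]| = \sum_(x in A) (Q x : nat).
Proof.
rewrite -sum1_card (eq_bigl (fun x => (x \in A) && Q x)); last by move=> x; rewrite inE.
by rewrite big_mkcondr; apply: eq_bigr => x _; case: (Q x).
Qed.

Section Design.
Variables (T P : finType) (G : {set T}) (blk : T -> {set P}) (r : nat).
Hypothesis pair_uniq : forall x x' y y', x != x' -> y \in G -> y' \in G ->
  x \in blk y -> x' \in blk y -> x \in blk y' -> x' \in blk y' -> y = y'.
Hypothesis pair_ex : forall x x', x != x' ->
  exists2 y, y \in G & (x \in blk y) && (x' \in blk y).
Hypothesis blk3 : forall y, y \in G -> #|blk y| = 3.
Hypothesis through : forall x, #|[set y in G | x \in blk y]| = r.

Definition meet (A B : {set P}) := A :&: B != set0.

Lemma meet_le1 y y' : y \in G -> y' \in G -> y != y' -> #|blk y :&: blk y'| <= 1.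
Proof.
move=> Gy Gy' ne; rewrite leqNgt; apply/negP=> /card_gt1P [x [x' [Hx Hx' nx]]].
move: Hx Hx'; rewrite !inE => /andP[a b] /andP[c d].
by case/eqP: ne; apply: (pair_uniq nx).
Qed.

Lemma card_meet y y' : y \in G -> y' \in G -> y != y' ->
  #|blk y :&: blk y'| = meet (blk y) (blk y').
Proof.
move=> Gy Gy' ne; have := meet_le1 Gy Gy' ne; rewrite /meet -cards_eq0.
by case: #|_| => [|[]].
Qed.

Lemma cardI_sum (A B : {set P}) : #|A :&: B| = \sum_(x in B) (x \in A : nat).
Proof.
have -> : A :&: B = [set x in B | x \in A] by apply/setP=> x; rewrite !inE andbC.
by rewrite cardsum.
Qed.

Lemma K g0 : g0 \in G ->
  #|[set y in G | (y != g0) && meet (blk y) (blk g0)]| = #|blk g0| * (r - 1).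
Proof.
move=> Gg0.
have -> : #|[set y in G | (y != g0) && meet (blk y) (blk g0)]| =
   \sum_(y in [set y in G | y != g0]) #|blk y :&: blk g0|.
  have -> : [set y in G | (y != g0) && meet (blk y) (blk g0)] =
     [set y in [set y in G | y != g0] | meet (blk y) (blk g0)].
    by apply/setP=> y; rewrite !inE andbA.
  rewrite cardsum; apply: eq_bigr => y; rewrite inE => /andP[Gy ne].
  by rewrite card_meet.
under eq_bigr => y _ do rewrite cardI_sum.
rewrite exchange_big /= -sum_nat_const; apply: eq_bigr => x Hx.
rewrite -cardsum.
have -> : [set y in [set y in G | y != g0] | x \in blk y] = [set y in G | x \in blk y] :\ g0.
  by apply/setP=> y; rewrite !inE; case: (y \in G); case: (y != g0); case: (x \in blk y).
have := cardsD1 g0 [set y in G | x \in blk y]; rewrite through !inE Gg0 Hx /=.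
by move=> ->; rewrite add1n subn1.
Qed.

Lemma cardT2 x0 x1 : #|[set y in G | (x0 \in blk y) && (x1 \in blk y)]| =
  if x0 == x1 then r else 1.
Proof.
case: eqP => [<-|/eqP ne].
  by rewrite -(through x0); apply: eq_card => y; rewrite !inE andbb.
have [y Gy /andP[a b]] := pair_ex ne.
have -> : [set y in G | (x0 \in blk y) && (x1 \in blk y)] = [set y].
  apply/setP=> z; rewrite !inE; apply/idP/eqP=> [/andP[Gz /andP[c d]]|->].
    exact: (pair_uniq ne).
  by rewrite Gy a b.
by rewrite cards1.
Qed.

Lemma sum_eq1 (B : {set P}) x0 : \sum_(x1 in B) (x0 == x1 : nat) = (x0 \in B).
Proof.
rewrite -cardsum; case Hx: (x0 \in B).
  have -> : [set x in B | x0 == x] = [set x0] by apply/setP=> x; rewrite !inE eq_sym andbC; case: eqP => [->|] //.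
  by rewrite cards1.
have -> : [set x in B | x0 == x] = set0 by apply/setP=> x; rewrite !inE; apply/negbTE/andP=> [[xB /eqP E]]; rewrite -E Hx in xB.
by rewrite cards0.
Qed.

Lemma M g0 g1 : g0 \in G -> g1 \in G -> g0 != g1 ->
  #|[set y in G | [&& y != g0, y != g1, meet (blk y) (blk g0) & meet (blk y) (blk g1)]]|
  + 6 * #|blk g0 :&: blk g1| = 9 + #|blk g0 :&: blk g1| * (r - 1).
Proof.
move=> Gg0 Gg1 ne01.
set B0 := blk g0; set B1 := blk g1; set S0 := [set y in G | (y != g0) && (y != g1)].
have E1 : #|[set y in G | [&& y != g0, y != g1, meet (blk y) B0 & meet (blk y) B1]]|
   = \sum_(x0 in B0) \sum_(x1 in B1) #|[set y in S0 | (x0 \in blk y) && (x1 \in blk y)]|.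
  have -> : [set y in G | [&& y != g0, y != g1, meet (blk y) B0 & meet (blk y) B1]] =
     [set y in S0 | meet (blk y) B0 && meet (blk y) B1].
    apply/setP=> y; rewrite !inE.
    by case: (y \in G); case: (y != g0); case: (y != g1).
  rewrite cardsum.
  have -> : \sum_(y in S0) (meet (blk y) B0 && meet (blk y) B1 : nat) =
     \sum_(y in S0) \sum_(x0 in B0) \sum_(x1 in B1) ((x0 \in blk y) && (x1 \in blk y) : nat).
    apply: eq_bigr => y; rewrite inE => /andP[Gy /andP[n0 n1]].
    rewrite -mulnb -card_meet // -card_meet // !cardI_sum big_distrl /=.
    by apply: eq_bigr => x0 _; rewrite big_distrr /=; apply: eq_bigr => x1 _; rewrite mulnb.
  rewrite exchange_big /=; apply: eq_bigr => x0 _.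
  by rewrite exchange_big /=; apply: eq_bigr => x1 _; rewrite cardsum.
have E2 : forall x0 x1, x0 \in B0 -> x1 \in B1 ->
    #|[set y in S0 | (x0 \in blk y) && (x1 \in blk y)]| + ((x1 \in B0) + (x0 \in B1))
    = 1 + (x0 == x1) * (r - 1).
  move=> x0 x1 H0 H1.
  set Tx := [set y in G | (x0 \in blk y) && (x1 \in blk y)].
  have cT : #|Tx| = 1 + (x0 == x1) * (r - 1).
    rewrite cardT2; case: eqP => _ //; rewrite mul1n addnC subnK //.
    by rewrite -(through x0); apply/card_gt0P; exists g0; rewrite !inE Gg0 H0.
  have -> : [set y in S0 | (x0 \in blk y) && (x1 \in blk y)] = (Tx :\ g0) :\ g1.
    apply/setP=> y; rewrite !inE.
    by case: (y \in G); case: (y != g0); case: (y != g1); case: (x0 \in blk y).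
  have e0 : (g0 \in Tx) = (x1 \in B0) by rewrite !inE Gg0 H0.
  have e1 : (g1 \in Tx :\ g0) = (x0 \in B1) by rewrite !inE eq_sym ne01 Gg1 H1 andbT.
  by rewrite -cT (cardsD1 g0 Tx) (cardsD1 g1 (Tx :\ g0)) e0 e1 addnC addnA.
have E3 : \sum_(x0 in B0) \sum_(x1 in B1) ((x1 \in B0) + (x0 \in B1)) = 6 * #|B0 :&: B1|.
  under eq_bigr => x0 _ do rewrite big_split /= -cardI_sum sum_nat_const blk3 //.
  rewrite big_split /= sum_nat_const blk3 // -big_distrr /= -cardI_sum setIC.
  by rewrite -mulnDl.
have E4 : \sum_(x0 in B0) \sum_(x1 in B1) (1 + (x0 == x1) * (r - 1)) = 9 + #|B0 :&: B1| * (r - 1).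
  under eq_bigr => x0 _ do rewrite big_split /= sum_nat_const blk3 // -big_distrl /= sum_eq1.
  rewrite big_split /= sum_nat_const blk3 // -big_distrl /= -cardI_sum setIC.
  by [].
rewrite E1 -E3 -E4 -big_split /=; apply: eq_bigr => x0 H0.
by rewrite -big_split /=; apply: eq_bigr => x1 H1; rewrite E2.
Qed.

End Design.

Import GRing.Theory FinRing.Theory.
Local Open Scope ring_scope.

Section Aff.
Variable F : finFieldType.

Definition act (g : {unit F} * F) (x : F) : F := val g.1 * x + g.2.

Lemma unit_neq0 (u : {unit F}) : val u != 0.
Proof. by rewrite -unitfE; apply: valP. Qed.

Lemma act_mul f g x : act (aff_mul f g) x = act f (act g x).
Proof. rewrite /act /aff_mul /=; ring. Qed.

Lemma act_one x : act (aff_one F) x = x.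
Proof. by rewrite /act /= mul1r addr0. Qed.

Lemma act_invl f x : act (aff_inv f) (act f x) = x.
Proof.
rewrite /act /aff_inv /= ?val_unitV mulrDr mulrA mulVf ?unit_neq0 //.
by rewrite mul1r addrK.
Qed.

Lemma act_invr f x : act f (act (aff_inv f) x) = x.
Proof.
rewrite /act /aff_inv /= ?val_unitV mulrDr mulrA mulfV ?unit_neq0 //.
by rewrite mul1r mulrN mulrA mulfV ?unit_neq0 // mul1r subrK.
Qed.

Lemma pair_ext f g : (forall x, act f x = act g x) -> f = g.
Proof.
case: f => [a b]; case: g => [a' b'] H.
have Hb : b = b' by move: (H 0); rewrite /act /= !mulr0 !add0r.
have : val a = val a' by move: (H 1); rewrite /act /= !mulr1 Hb => /addIr.
by move/val_inj => ->; rewrite Hb.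
Qed.

Lemma act_inj f : injective (act f).
Proof. by move=> x y E; rewrite -(act_invl f x) E act_invl. Qed.

Lemma mulKV (x y : {unit F} * F) : aff_mul (aff_mul x (aff_inv y)) y = x.
Proof. by apply: pair_ext => z; rewrite !act_mul act_invl. Qed.
Lemma mulKr (h y : {unit F} * F) : aff_mul (aff_mul h y) (aff_inv y) = h.
Proof. by apply: pair_ext => z; rewrite !act_mul act_invr. Qed.
Lemma mulKl (h y : {unit F} * F) : aff_mul (aff_inv h) (aff_mul h y) = y.
Proof. by apply: pair_ext => z; rewrite !act_mul act_invl. Qed.
Lemma mul_invr (h : {unit F} * F) : aff_mul h (aff_inv h) = aff_one F.
Proof. by apply: pair_ext => z; rewrite !act_mul act_invr act_one. Qed.
Lemma mul_invl (h : {unit F} * F) : aff_mul (aff_inv h) h = aff_one F.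
Proof. by apply: pair_ext => z; rewrite !act_mul act_invl act_one. Qed.
Lemma mul1a (h : {unit F} * F) : aff_mul h (aff_one F) = h.
Proof. by apply: pair_ext => z; rewrite !act_mul act_one. Qed.
Lemma invK (h : {unit F} * F) : aff_inv (aff_inv h) = h.
Proof.
apply: pair_ext => z; apply: (@act_inj (aff_inv h)).
by rewrite act_invr act_invl.
Qed.

Variables (H0 : {group {unit F}}) (c : F).
Local Notation G := (aff_group H0).
Local Notation m := #|H0|.
Fact B0_key : unit. Proof. exact: tt. Qed.
Definition B0 : {set F} := locked [set 0; 1; c].
Lemma memB0 x : (x \in B0) = [|| x == 0, x == 1 | x == c].
Proof. by rewrite /B0 -lock !inE orbA. Qed.
Definition blk g := act g @: B0.

Hypotheses (c0 : c != 0) (c1 : c != 1).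
Hypothesis qm : #|F| = (6 * m).+1.
Hypothesis Cnd : forall u v u' v', u \in B0 -> v \in B0 -> u' \in B0 -> v' \in B0 ->
  u != v -> u' != v' -> (v - u) ^+ m = (v' - u') ^+ m -> u = u' /\ v = v'.

Lemma groupM_aff f g : f \in G -> g \in G -> aff_mul f g \in G.
Proof. by rewrite !inE /= => ? ?; apply: groupM. Qed.
Lemma groupV_aff f : f \in G -> aff_inv f \in G.
Proof. by rewrite !inE /= groupV. Qed.
Lemma group1_aff : aff_one F \in G.
Proof. by rewrite !inE /=. Qed.

Lemma cardB0 : #|B0| = 3%N.
Proof.
rewrite /B0 -lock -setUA !cardsU1 cards1 !inE eq_sym oner_eq0 (eq_sym 0) (negbTE c0).
by rewrite (eq_sym 1) (negbTE c1).
Qed.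

Lemma blk3 g : g \in G -> #|blk g| = 3%N.
Proof. by move=> _; rewrite card_imset ?cardB0 //; apply: act_inj. Qed.

Lemma H0pow (a : {unit F}) : a \in H0 -> (val a) ^+ m = 1.
Proof. by move=> Ha; rewrite -val_unitX cyclic.expg_cardG. Qed.

Lemma inj2 g g' u v u' v' : g.1 \in H0 -> g'.1 \in H0 -> u \in B0 -> v \in B0 ->
  u' \in B0 -> v' \in B0 -> u != v -> u' != v' ->
  act g u = act g' u' -> act g v = act g' v' -> [/\ g = g', u = u' & v = v'].
Proof.
move=> Gg Gg' Hu Hv Hu' Hv' nuv nuv' Eu Ev.
have E : val g.1 * (v - u) = val g'.1 * (v' - u').
  transitivity (act g v - act g u); first by rewrite /act; ring.
  by rewrite Ev Eu /act; ring.
have Ep : (v - u) ^+ m = (v' - u') ^+ m.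
  by move: (congr1 (fun z => z ^+ m) E); rewrite !exprMn !H0pow ?mul1r.
have [eu ev] := Cnd Hu Hv Hu' Hv' nuv nuv' Ep; subst u' v'.
have ea : val g.1 = val g'.1.
  apply: (mulIf _ E); by rewrite subr_eq0 eq_sym.
have eb : g.2 = g'.2 by move: Eu; rewrite /act ea => /addrI.
split=> //; apply: pair_ext => x; by rewrite /act ea eb.
Qed.

Lemma pair_uniq x x' y y' : x != x' -> y \in G -> y' \in G ->
  x \in blk y -> x' \in blk y -> x \in blk y' -> x' \in blk y' -> y = y'.
Proof.
move=> nx Gy Gy' /imsetP[u Hu Eu] /imsetP[v Hv Ev] /imsetP[u' Hu' Eu'] /imsetP[v' Hv' Ev'].
have nuv : u != v by apply: contra nx => /eqP e; rewrite Eu Ev e.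
have nuv' : u' != v' by apply: contra nx => /eqP e; rewrite Eu' Ev' e.
move: Gy Gy'; rewrite !inE => Gy Gy'.
by case: (inj2 Gy Gy' Hu Hv Hu' Hv' nuv nuv' (etrans (esym Eu) Eu') (etrans (esym Ev) Ev')).
Qed.


Definition Dl := [set uv in setX B0 B0 | uv.1 != uv.2].

Lemma cardDl : #|Dl| = 6%N.
Proof.
have := cardsID [set uv : F * F | uv.1 == uv.2] (setX B0 B0).
have -> : setX B0 B0 :&: [set uv : F * F | uv.1 == uv.2] = (fun u => (u, u)) @: B0.
  apply/setP=> [[u v]]; rewrite !inE /=; apply/idP/imsetP.
    by case/andP=> /andP[Hu _] /eqP E; exists u; [done | rewrite E].
  by case=> w Hw [-> ->]; rewrite Hw eqxx.
have -> : setX B0 B0 :\: [set uv : F * F | uv.1 == uv.2] = Dl.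
  by apply/setP=> [[u v]]; rewrite !inE /= andbC.
rewrite card_imset; last by move=> a b [].
rewrite cardsX cardB0 => H; exact: (@addnI 3 _ 6 H).
Qed.

Lemma cardG : #|G| = (m * #|F|)%N.
Proof.
have -> : G = setX H0 [set: F] by apply/setP=> [[a b]]; rewrite !inE andbT.
by rewrite cardsX cardsT.
Qed.

Lemma cardOff : #|[set xy : F * F | xy.1 != xy.2]| = (#|F| * #|F| - #|F|)%N.
Proof.
have := cardsC [set xy : F * F | xy.1 == xy.2].
have -> : ~: [set xy : F * F | xy.1 == xy.2] = [set xy : F * F | xy.1 != xy.2].
  by apply/setP=> xy; rewrite !inE.
have -> : [set xy : F * F | xy.1 == xy.2] = (fun u => (u, u)) @: [set: F].
  apply/setP=> [[u v]]; rewrite !inE /=; apply/idP/imsetP.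
    by move/eqP <-; exists u.
  by case=> w _ [-> ->].
rewrite card_imset; last by move=> a b [].
by rewrite cardsT card_prod => <-; rewrite addKn.
Qed.

Lemma pair_ex x x' : x != x' -> exists2 y, y \in G & (x \in blk y) && (x' \in blk y).
Proof.
move=> nx.
pose Phi := fun (p : ({unit F} * F) * (F * F)) => (act p.1 p.2.1, act p.1 p.2.2).
have injP : {in setX G Dl &, injective Phi}.
  move=> [g [u v]] [g' [u' v']]; rewrite !inE /=.
  move=> /andP[Gg /andP[/andP[Hu Hv] nuv]] /andP[Gg' /andP[/andP[Hu' Hv'] nuv']] [e1 e2].
  by case: (inj2 Gg Gg' Hu Hv Hu' Hv' nuv nuv' e1 e2) => -> -> ->.
have sub : Phi @: setX G Dl \subset [set xy : F * F | xy.1 != xy.2].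
  apply/subsetP=> xy /imsetP[[g [u v]]]; rewrite !inE /= => /andP[_ /andP[_ nuv]] -> /=.
  by apply: contra nuv => /eqP/act_inj ->.
have eqS : Phi @: setX G Dl = [set xy : F * F | xy.1 != xy.2].
  apply/eqP; rewrite eqEcard sub /= card_in_imset // cardsX cardG cardDl cardOff qm.
  set k := m; apply/leP; rewrite !mulSn !mulnS; lia.
have : (x, x') \in [set xy : F * F | xy.1 != xy.2] by rewrite inE.
rewrite -eqS => /imsetP[[g [u v]]]; rewrite !inE /= => /andP[Gg /andP[/andP[Hu Hv] _]] [-> ->].
by exists g; [rewrite inE | rewrite /blk !imset_f].
Qed.

Lemma through x : #|[set y in G | x \in blk y]| = (3 * m)%N.
Proof.
pose psi := fun (p : {unit F} * F) => (p.1, x - val p.1 * p.2).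
have -> : [set y in G | x \in blk y] = psi @: setX H0 B0.
  apply/setP=> [[a b]]; rewrite !inE /=; apply/idP/imsetP.
    case/andP=> Ha /imsetP[u Hu Eu]; exists (a, u); first by rewrite !inE Ha Hu.
    by rewrite /psi /= Eu /act /=; congr pair; ring.
  case=> [[a' u]]; rewrite !inE /= => /andP[Ha Hu] [-> ->]; rewrite Ha /=.
  by apply/imsetP; exists u => //; rewrite /act /=; ring.
rewrite card_in_imset; first by rewrite cardsX cardB0 mulnC.
move=> [a u] [a' u'] _ _ [ea]; rewrite /= ea => /addrI /eqP.
by rewrite eqr_opp => /eqP /(mulfI (unit_neq0 a')) ->.
Qed.


Lemma blk_mul f y : blk (aff_mul f y) = act f @: blk y.
Proof. by rewrite /blk -imset_comp; apply: eq_imset => z; rewrite /= act_mul. Qed.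

Lemma meet_mul f a b : meet (blk (aff_mul f a)) (blk (aff_mul f b)) = meet (blk a) (blk b).
Proof.
rewrite /meet !blk_mul -imsetI; last by move=> u v _ _; apply: act_inj.
by rewrite imset_eq0.
Qed.

Lemma meetC (A B : {set F}) : meet A B = meet B A.
Proof. by rewrite /meet setIC. Qed.

Local Notation one := (aff_one F).

Definition Dset := [set y in G | (y != one) && meet (blk y) (blk one)].

Lemma Dinv y : y \in Dset -> aff_inv y \in Dset.
Proof.
rewrite !inE => /andP[Gy /andP[n1 my]].
have Gy' : y \in G by rewrite inE.
have := groupV_aff Gy'; rewrite inE => ->; rewrite /=.
apply/andP; split.
  apply: contra n1 => /eqP e; apply/eqP.
  by rewrite -(invK y) e; apply: pair_ext => z; rewrite -{1}(act_one z) act_invl act_one.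
by rewrite -[blk one](congr1 blk (mul_invl y)) -[blk (aff_inv y)](congr1 blk (mul1a (aff_inv y))) meet_mul meetC.
Qed.

Lemma main_pds : is_regular_PDS (@aff_mul F) (@aff_inv F) (aff_one F) G
   (m * #|F|) (3 * (3 * m - 1)) (3 * m + 2) 9 Dset.
Proof.
have pu := @pair_uniq; have pe := @pair_ex; have b3 := @blk3; have th := @through.
have G1 := group1_aff.
split; first split.
- by apply/subsetP=> y; rewrite inE => /andP[].
- exact: cardG.
- by rewrite /Dset (K pu th G1) (blk3 G1).
- move=> h Gh nh1.
  have Gh' : aff_inv h \in G := groupV_aff Gh.
  have n1h : one != aff_inv h.
    apply: contra nh1 => /eqP e; apply/eqP.
    by rewrite -(invK h) -e; apply: pair_ext => z; rewrite -{1}(act_one z) act_invl act_one.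
  rewrite /pds_count.
  have -> : [set xy in setX Dset Dset | aff_mul xy.1 (aff_inv xy.2) == h] =
      (fun y => (aff_mul h y, y)) @: [set y in Dset | aff_mul h y \in Dset].
    apply/setP=> [[x y]]; rewrite in_set in_setX /=; apply/idP/imsetP.
      case/andP=> /andP[xD yD] /eqP E; exists y; last by rewrite -E mulKV.
      by rewrite in_set yD -E mulKV xD.
    case=> z; rewrite in_set => /andP[zD hzD] [-> ->].
    by rewrite hzD zD mulKr eqxx.
  rewrite card_imset; last by move=> y1 y2 [].
  have -> : [set y in Dset | aff_mul h y \in Dset] =
     [set y in G | [&& y != one, y != aff_inv h, meet (blk y) (blk one) & meet (blk y) (blk (aff_inv h))]].
    apply/setP=> y; rewrite !in_set.
    have Gh1 : h.1 \in H0 by move: Gh; rewrite inE.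
    case Gy: (y.1 \in H0) => //=.
    have -> : ((h.1 * y.1)%g \in H0) by apply: groupM.
    have -> : (aff_mul h y != one) = (y != aff_inv h).
      congr negb; apply/eqP/eqP=> [e|->]; last exact: mul_invr.
      by rewrite -(mulKl h y) e mul1a.
    have -> : meet (blk (aff_mul h y)) (blk one) = meet (blk y) (blk (aff_inv h)).
      by rewrite -[blk one](congr1 blk (mul_invr h)) meet_mul.
    by case: (y != one); case: (y != aff_inv h); case: meet.
  have := M pu pe b3 th G1 Gh' n1h.
  rewrite (card_meet pu G1 Gh' n1h).
  have -> : meet (blk one) (blk (aff_inv h)) = (h \in Dset).
    rewrite -(meet_mul h) mul1a mul_invr /Dset in_set.
    by move: Gh; rewrite inE => ->; rewrite nh1.
  case: (h \in Dset) => /=; last by rewrite addn0.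
  have m1 : (0 < m)%N by apply/card_gt0P; exists 1%g; apply: group1.
  move=> E; apply/eqP; rewrite -(eqn_add2r 6) E; apply/eqP.
  by move: m1; rewrite /= mul1n; lia.

- apply/setP=> y; apply/idP/imsetP=> [yD|[z zD ->]]; last exact: Dinv.
  by exists (aff_inv y); [exact: Dinv | rewrite invK].
- by rewrite inE eqxx /= andbF.
Qed.

End Aff.


Lemma arith (U P0 P1 P2 S01 S012 Q Q1 Qm1 f m : nat) : (0 < m)%N -> f = (6 * m).+1 ->
  (U + 2 = f)%N -> (U <= S012)%N -> (S012 <= S01 + P2)%N -> (S01 <= P0 + P1)%N ->
  (P0 <= Q1)%N -> (P1 <= Qm1)%N -> (P2 <= P1)%N -> Q1 = (Q - 1)%N -> Qm1 = (Q - 1)%N ->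
  (Q <= 2 * m)%N -> False.
Proof. lia. Qed.

Section C.
Variables (F : finFieldType) (m : nat).
Hypothesis m0 : (0 < m)%N.
Hypothesis qm : #|F| = (6 * m).+1.

Local Notation k x := (x ^+ (2 * m)).

Lemma kN (y : F) : k (- y) = k y.
Proof. by rewrite !exprM sqrrN. Qed.

Lemma exists_c : exists c : F,
  [&& c != 0, c != 1, k c != 1, k (c - 1) != 1 & k c != k (c - 1)].
Proof.
case: (boolP [exists c : F, [&& c != 0, c != 1, k c != 1, k (c - 1) != 1 & k c != k (c - 1)]]).
  by case/existsP=> c Hc; exists c.
move/existsPn=> H; exfalso.
pose Q := [set x : F | k x == 1].
have cQ : (#|Q| <= 2 * m)%N.
  rewrite cardE; apply: max_unity_roots; first by rewrite muln_gt0.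
    by apply/allP=> x; rewrite mem_enum inE unity_rootE.
  exact: enum_uniq.
have Q1 : (1 : F) \in Q by rewrite inE expr1n.
have Qm1 : (-1 : F) \in Q by rewrite inE kN expr1n.
pose P0 := [set x : F | [&& x != 0, x != 1 & k x == 1]].
pose P1 := [set x : F | [&& x != 0, x != 1 & k (x - 1) == 1]].
pose P2 := [set x : F | [&& x != 0, x != 1 & k x == k (x - 1)]].
pose U := [set x : F | (x != 0) && (x != 1)].
have eQ1 : #|Q :\ 1| = (#|Q| - 1)%N by rewrite [#|Q|](cardsD1 1 Q) Q1 add1n subn1.
have eQm1 : #|Q :\ -1| = (#|Q| - 1)%N by rewrite [#|Q|](cardsD1 (-1) Q) Qm1 add1n subn1.
have c0 : (#|P0| <= #|Q :\ (1%R:F)|)%N.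
  by apply: subset_leq_card; apply/subsetP=> x; rewrite !inE => /and3P[_ -> ->].
have c1 : (#|P1| <= #|Q :\ ((-1)%R:F)|)%N.
  have : (fun x => x - 1) @: P1 \subset Q :\ -1.
    apply/subsetP=> y /imsetP[x]; rewrite !inE => /and3P[x0 _ kx] ->.
    by rewrite kx andbT subr_eq addrC subrr.
  move/subset_leq_card; rewrite card_imset //; exact: addIr.
have c2 : (#|P2| <= #|P1|)%N.
  have : (fun x => x^-1) @: P2 \subset P1.
    apply/subsetP=> y /imsetP[x]; rewrite !inE => /and3P[x0 x1 kx] ->.
    rewrite invr_eq0 invr_eq1 x0 x1 /=.
    have -> : x^-1 - 1 = - (x - 1) * x^-1 by field.
    rewrite exprMn kN -(eqP kx) exprVn mulfV //.
    by rewrite expf_neq0.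
  move/subset_leq_card; rewrite card_imset //; exact: invr_inj.
have cU : (#|U| + 2 = #|F|)%N.
  have -> : U = ~: [set 0; 1] by apply/setP=> x; rewrite !inE negb_or.
  by rewrite -(cardsC [set (0 : F); 1]) cards2 eq_sym oner_eq0 addnC.
have sU : U \subset P0 :|: P1 :|: P2.
  apply/subsetP=> x; rewrite !inE => /andP[x0 x1]; rewrite x0 x1 /=.
  move: (H x); rewrite x0 x1 /=.
  by case: (k x == 1); case: (k (x - 1) == 1); case: (k x == k (x - 1)).
have s1 : (#|U| <= #|P0 :|: P1 :|: P2|)%N by apply: subset_leq_card.
have s2 : (#|P0 :|: P1 :|: P2| <= #|P0 :|: P1| + #|P2|)%N by apply: leq_card_setU.
have s3 : (#|P0 :|: P1| <= #|P0| + #|P1|)%N by apply: leq_card_setU.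
exact: (arith m0 qm cU s1 s2 s3 c0 c1 c2 eQ1 eQm1 cQ).
Qed.


Lemma sq (y z : F) : y ^+ m = z ^+ m -> k y = k z.
Proof. by rewrite mulnC !exprM => ->. Qed.

Lemma Cnd_of (c : F) : odd m -> (2%:R : F) != 0 -> c != 0 -> c != 1 ->
  k c != 1 -> k (c - 1) != 1 -> k c != k (c - 1) ->
  forall u v u' v', u \in B0 c -> v \in B0 c -> u' \in B0 c -> v' \in B0 c ->
  u != v -> u' != v' -> (v - u) ^+ m = (v' - u') ^+ m -> u = u' /\ v = v'.
Proof.
move=> modd two c0 c1 h1 h2 h3.
have sgn (y : F) : y != 0 -> y ^+ m = (- y) ^+ m -> False.
  move=> y0 E.
  have : y ^+ m * 2%:R = 0.
    by rewrite mulr_natr mulr2n {2}E exprNn -signr_odd modd expr1 mulN1r subrr.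
  by move/eqP; rewrite mulf_eq0 (negbTE two) orbF expf_eq0 (negbTE y0) andbF.
have sgn' (y : F) : y != 0 -> (- y) ^+ m = y ^+ m -> False.
  by move=> y0 E; apply: (sgn y y0); rewrite E.
have nz1 : (1 : F) != 0 := oner_neq0 _.
have nzc1 : c - 1 != 0 by rewrite subr_eq0.
have e1c : 1 - c = - (c - 1) by rewrite opprB.
have n1 : k c <> 1 by move/eqP; rewrite (negbTE h1).
have n1' : 1 <> k c by move/esym/eqP; rewrite (negbTE h1).
have n2 : k (c - 1) <> 1 by move/eqP; rewrite (negbTE h2).
have n2' : 1 <> k (c - 1) by move/esym/eqP; rewrite (negbTE h2).
have n3 : k c <> k (c - 1) by move/eqP; rewrite (negbTE h3).
have n3' : k (c - 1) <> k c by move/esym/eqP; rewrite (negbTE h3).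
move=> u v u' v'; rewrite !memB0.
move=> /or3P[]/eqP-> /or3P[]/eqP-> /or3P[]/eqP-> /or3P[]/eqP-> nuv nuv' E.
all: try by split.
all: try by rewrite eqxx in nuv.
all: try by rewrite eqxx in nuv'.
all: exfalso; move: E; rewrite ?subr0 ?sub0r ?e1c => E.
all: first [ exact: (sgn _ nz1 E) | exact: (sgn _ c0 E) | exact: (sgn _ nzc1 E)
           | exact: (sgn' _ nz1 E) | exact: (sgn' _ c0 E) | exact: (sgn' _ nzc1 E)
           | (move/sq: E; rewrite ?kN ?expr1n => E;
              first [exact: (n1 E) | exact: (n1' E) | exact: (n2 E) | exact: (n2' E)
                    | exact: (n3 E) | exact: (n3' E)]) ].
Qed.

End C.

Local Close Scope ring_scope.
Unset Implicit Arguments.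
Set Strict Implicit.

Theorem mainTheorem20 (F : finFieldType) (p d : nat) (H0 : {group {unit F}}) :
  prime p -> 0 < d -> #|F| = p ^ d -> 9 < p ^ d -> p ^ d %% 12 = 7 ->
  #|H0| = (p ^ d - 1) %/ 6 ->
  exists D : {set {unit F} * F},
    is_regular_PDS (@aff_mul F) (@aff_inv F) (aff_one F) (aff_group H0)
      (p ^ d * (p ^ d - 1) %/ 6) (3 * (p ^ d - 3) %/ 2) ((p ^ d + 3) %/ 2) 9 D.
Proof.
move=> pp d0 qF q9 q12 H0c.
have m0 : (0 < #|H0|)%N by apply/card_gt0P; exists 1%g; exact: group1.
have qm : #|F| = (6 * #|H0|).+1 by rewrite qF H0c; lia.
have modd : odd #|H0|.
  have h : (#|H0| %% 2 = 1)%N by rewrite H0c; lia.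
  by move: h; rewrite modn2; case: (odd _).
have two : (2%:R : F)%R != 0%R.
  have pc := card_finPcharP qF pp.
  have p0 : (p%:R : F)%R = 0%R := pcharf0 pc.
  have podd : odd p.
    have h : (p ^ d %% 2 = 1)%N by lia.
    have dn0 : (d == 0) = false by rewrite eqn0Ngt d0.
    by move: h; rewrite modn2 oddX dn0 /=; case: (odd p).
  apply/eqP => h2; move: p0.
  rewrite -(odd_double_half p) podd natrD -muln2 natrM h2 mulr0 addr0 /=.
  by move/eqP; rewrite oner_eq0.
have [c /and5P[c0 c1 h1 h2 h3]] := exists_c m0 qm.
have Cnd := Cnd_of modd two c0 c1 h1 h2 h3.
exists (Dset H0 c).
have e1 : (p ^ d * (p ^ d - 1) %/ 6 = #|H0| * #|F|)%N.
  by rewrite -qF qm subn1 /= mulnCA mulKn // mulnC.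
have e2 : (3 * (p ^ d - 3) %/ 2 = 3 * (3 * #|H0| - 1))%N by rewrite -qF qm; lia.
have e3 : ((p ^ d + 3) %/ 2 = 3 * #|H0| + 2)%N by rewrite -qF qm; lia.
rewrite e1 e2 e3.
exact: (main_pds c0 c1 qm Cnd).
Qed.
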